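(* Let $v$ be an odd positive integer and $k$ a positive integer. Every $(v,k)$ cyclic difference packing $(\mathbb{Z}_v,\mathcal{D})$ is a $(v,k,1)$ non-half-sum disjoint packing, i.e., $(\mathbb{Z}_v,\{\mathcal{D}\})$ is a $(v,k,1)$ NHSDP.
   Context: A $(v,k)$ cyclic difference packing (CDP) is a pair $(\mathbb{Z}_v,\mathcal{D})$ where $\mathcal{D}=\{d_1,\dots,d_k\}$ is a $k$-subset of $\mathbb{Z}_v$ such that each non-zero element of $\mathbb{Z}_v$ has at most one representation as a difference $d_i-d_j$ with $d_i,d_j\in\mathcal{D}$. For odd $v$, a $(v,g,b)$ non-half-sum disjoint packing (NHSDP) is a pair $(\mathbb{Z}_v,\mathfrak{D})$ where $\mathfrak{D}$ is a family of $b$ subsets (''blocks'') of $\mathbb{Z}_v$, each of size $g$, such that (i) any two different blocks are disjoint, and (ii) for each block $\mathcal{D}\in\mathfrak{D}$ and any two different elements $x,y\in\mathcal{D}$, the half-sum $(x+y)\cdot2^{-1}\in\mathbb{Z}_v$ does not belong to any block of $\mathfrak{D}$. *)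

(* Defs.v *)
From mathcomp Require Import all_boot.
Unset Printing Implicit Defensive.

(* Z_v is modelled by 'I_v with arithmetic modulo v (this covers v = 1 too,
   unlike mathcomp's 'Z_v). *)

Definition zdiff {v : nat} (x y : 'I_v) : nat := (x + (v - y)) %% v.

(* half-sum (x + y) * 2^{-1} in Z_v, for v odd: 2^{-1} = (v+1)/2 mod v *)
Definition zhalfsum {v : nat} (x y : 'I_v) : nat := ((x + y) * (v.+1)./2) %% v.

Definition is_CDP (v k : nat) (D : {set 'I_v}) : Prop :=
  #|D| = k /\
  forall d : nat, 0 < d < v ->
    #|[set p in setX D D | zdiff (v:=v) p.1 p.2 == d]| <= 1.

Definition is_NHSDP (v g b : nat) (F : {set {set 'I_v}}) : Prop :=
  #|F| = b /\
  (forall B, B \in F -> #|B| = g) /\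
  (forall B1 B2, B1 \in F -> B2 \in F -> B1 != B2 -> [disjoint B1 & B2]) /\
  (forall B, B \in F -> forall x y : 'I_v, x \in B -> y \in B -> x != y ->
     forall B', B' \in F -> forall z : 'I_v, z \in B' -> (z : nat) <> zhalfsum (v:=v) x y).

(* Main.v *)
Require Import Defs.
From mathcomp Require Import all_boot.
From mathcomp Require Import zify.

Lemma zdiff_eq0 (v : nat) (x y : 'I_v) : zdiff x y = 0 -> x = y.
Proof.
rewrite /zdiff => H.
have xv := ltn_ord x; have yv := ltn_ord y.
set n := x + (v - y) in H.
have E := divn_eq n v. rewrite H addn0 in E.
have Hq : n %/ v < 2 by rewrite ltn_divLR; [rewrite /n; lia | lia].
apply: val_inj => /=.
move: E; case: (n %/ v) Hq => [|[|q]] //= _; rewrite /n; lia.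
Qed.

Lemma zdiff_mid (v : nat) (x y z : 'I_v) : odd v ->
  (z : nat) = zhalfsum x y -> zdiff z x = zdiff y z.
Proof.
move=> ov Hz.
have xv := ltn_ord x; have yv := ltn_ord y; have zv := ltn_ord z.
have h2 : (v.+1)./2 * 2 = v + 1.
  have := odd_double_half v.+1. rewrite /= ov /= -muln2. lia.
have H2 : z * 2 = x + y %[mod v].
  rewrite Hz /zhalfsum modnMml -mulnA h2 mulnDr muln1 -modnDml modnMl add0n //.
rewrite /zdiff; apply/eqP.
rewrite -(eqn_modDr (z + x)).
have -> : z + (v - x) + (z + x) = z * 2 + v by lia.
have -> : y + (v - z) + (z + x) = x + y + v by lia.
by rewrite -modnDml H2 modnDml.
Qed.

Theorem lemma5 (v k : nat) (D : {set 'I_v}) :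
  odd v -> 0 < k -> is_CDP v k D -> is_NHSDP v k 1 [set D].
Proof.
move=> ov k0 [cD pD].
split; first by rewrite cards1.
split; first by move=> B /set1P ->.
split; first by move=> B1 B2 /set1P -> /set1P ->; rewrite eqxx.
move=> B /set1P -> x y xD yD xy B' /set1P -> z zD Hz.
have E := @zdiff_mid v x y z ov Hz.
have zx : z != x.
  apply/eqP => zx; move: E; rewrite zx /zdiff subnKC ?modnn; last exact: ltnW.
  move/esym/zdiff_eq0 => yx; by rewrite yx eqxx in xy.
have zy : z != y.
  apply/eqP => zy; move: E; rewrite zy /zdiff subnKC ?modnn; last exact: ltnW.
  move/zdiff_eq0 => yx; by rewrite yx eqxx in xy.
have d0 : 0 < zdiff z x < v.
  apply/andP; split; last by rewrite /zdiff ltn_pmod // (leq_ltn_trans (leq0n _) (ltn_ord x)).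
  rewrite lt0n; apply/eqP => /zdiff_eq0 /eqP; by rewrite (negbTE zx).
have := pD _ d0.
have sub : [set (z, x); (y, z)] \subset [set p in setX D D | zdiff p.1 p.2 == zdiff z x].
  apply/subsetP => p /set2P [->|->]; rewrite !inE /= ?zD ?xD ?yD ?eqxx //= E //.
have := subset_leq_card sub.
rewrite cards2.
have -> : ((z, x) != (y, z)) = true by rewrite xpair_eqE (negbTE zy).
move=> h1 h2; have := leq_trans h1 h2; by [].
Qed.
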